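(* Let $\rho$ be a density operator and $\sigma$ a non-negative operator on a finite-dimensional Hilbert space, and let $1\ge\epsilon>\epsilon'\ge0$. Then $$D_H^\epsilon(\rho\|\sigma)\le D_{\max}^{\epsilon'}(\rho\|\sigma)+\log_2\frac{\epsilon}{\epsilon-\epsilon'}.$$
   Context: The fidelity is $F(\rho,\sigma)=\|\sqrt\rho\sqrt\sigma\|_1$. For non-negative $\rho,\sigma$ and $\epsilon\in(0,\mathrm{tr}(\rho)]$, the generalised relative entropy is defined by $2^{-D_H^\epsilon(\rho\|\sigma)}=\inf\{\mathrm{tr}(Q\sigma)/\epsilon:\ 0\le Q\le\mathrm{id},\ \mathrm{tr}(Q\rho)\ge\epsilon\}$. For a density operator $\rho$ and $\epsilon\ge0$, the $\epsilon$-smooth max-relative entropy is defined by $2^{-D_{\max}^\epsilon(\rho\|\sigma)}=\sup\{\mu:\ \mu\bar\rho\le\sigma,\ 1-F(\bar\rho,\rho)^2\le\epsilon^2\}$, the supremum over non-negative operators $\bar\rho$ with $\mathrm{tr}(\bar\rho)\le1$ and reals $\mu$. In both cases the relative entropy is $\infty$ when the right-hand side is $0$. *)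

(* Defs.v *)
From HB Require Import structures.
From mathcomp Require Import all_boot all_order all_algebra.
From mathcomp Require Import complex.
From mathcomp Require Import boolp classical_sets reals constructive_ereal ereal exp.
Set Implicit Arguments. Unset Strict Implicit. Unset Printing Implicit Defensive.
Import Order.TTheory GRing.Theory Num.Theory.
Local Open Scope ring_scope.
Local Open Scope classical_set_scope.
Local Open Scope complex_scope.

(* Operators on the finite-dimensional Hilbert space C^n are n x n complex
   matrices, with complex numbers R[i] over a real field R : realType. *)

Section Quantum.
Variable R : realType.
Local Notation C := R[i].
Variable n : nat.
Local Notation M := 'M[C]_n.

Definition adjmx (A : 'M[C]_(n, n)) : M := (map_mx (@conjc R) A)^T.

Definition psd (A : M) : Prop :=
  adjmx A = A /\ forall v : 'cV[C]_n, 0 <= ((map_mx (@conjc R) v)^T *m A *m v) 0 0.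

Definition loewner (A B : M) : Prop := psd (B - A).

Definition density (rho : M) : Prop := psd rho /\ \tr rho = 1.

(* the (unique) non-negative square root of a non-negative operator;
   (defined as 0 on operators having no non-negative square root) *)
Definition psd_sqrt (A : M) : M :=
  match pselect (exists B : M, psd B /\ B *m B = A) with
  | left H => projT1 (cid H)
  | right _ => 0
  end.

Definition trnorm (X : M) : R := @complex.Re R (\tr (psd_sqrt (adjmx X *m X))).

Definition fidelity (rho sigma : M) : R := trnorm (psd_sqrt rho *m psd_sqrt sigma).

Definition log2 (x : R) : R := ln x / ln 2.

Definition neglog2 (x : \bar R) : \bar R :=
  match x with
  | EFin r => if r <= 0 then +oo%E else (- log2 r)%:E
  | +oo%E => -oo%E
  | -oo%E => +oo%E
  end.

(* 2^{-D_H^eps(rho||sigma)} = inf { tr(Q sigma)/eps : 0 <= Q <= id, tr(Q rho) >= eps } *)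
Definition DH_set (eps : R) (rho sigma : M) : set R :=
  [set x | exists Q : M, [/\ psd Q, loewner Q 1%:M,
       eps%:C <= \tr (Q *m rho) & x%:C = \tr (Q *m sigma) / eps%:C]].

Definition DH (eps : R) (rho sigma : M) : \bar R :=
  neglog2 (ereal_inf [set x%:E | x in DH_set eps rho sigma]).

(* 2^{-D_max^eps(rho||sigma)} = sup { mu : mu rhobar <= sigma, 1 - F(rhobar,rho)^2 <= eps^2 },
   over non-negative rhobar with tr rhobar <= 1 and real mu *)
Definition Dmax_set (eps : R) (rho sigma : M) : set R :=
  [set mu | exists rhob : M, [/\ psd rhob, \tr rhob <= 1,
       loewner (mu%:C *: rhob) sigma &
       1 - fidelity rhob rho ^+ 2 <= eps ^+ 2]].

Definition Dmax (eps : R) (rho sigma : M) : \bar R :=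
  neglog2 (ereal_sup [set x%:E | x in Dmax_set eps rho sigma]).

End Quantum.

(* Main.v *)
Require Import Defs.
From HB Require Import structures.
From mathcomp Require Import all_boot all_order all_algebra.
From mathcomp Require Import complex spectral sesquilinear.
From mathcomp Require Import ring lra.
From mathcomp Require Import boolp classical_sets reals constructive_ereal ereal exp.
Import Order.TTheory GRing.Theory Num.Theory.
Local Open Scope ring_scope.
Local Open Scope complex_scope.
Set Implicit Arguments. Unset Strict Implicit. Unset Printing Implicit Defensive.

Section RealAux.
Variable R : realType.

Lemma le_sqrt_of_sqr (x y : R) : 0 <= x -> x ^+ 2 <= y -> x <= Num.sqrt y.
Proof.
move=> x0 h; have := ler_wsqrtr h.
by rewrite sqrtr_sqr ger0_norm.
Qed.

Lemma cs_real (p q x : R) : 0 <= p -> 0 <= q ->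
  (forall s, 0 < s -> 0 <= s ^+ 2 * p - 2 * s * x + q) -> x <= Num.sqrt (p * q).
Proof.
move=> p0 q0 h.
have [x0|xpos] := lerP x 0; first by apply: le_trans x0 (sqrtr_ge0 _).
have [pz|ppos] := eqVneq p 0.
  have := h ((q + 1) / x) (divr_gt0 (ltr_pwDr ltr01 q0) xpos).
  have -> : ((q + 1) / x) ^+ 2 * p - 2 * ((q + 1) / x) * x + q = - q - 2.
    by rewrite pz; field; rewrite gt_eqF.
  move=> hh; exfalso; lra.
have pp : 0 < p by rewrite lt_neqAle eq_sym ppos p0.
have := h (x / p) (divr_gt0 xpos pp) => hh.
apply: le_sqrt_of_sqr; first exact: ltW.
have e : (x / p) ^+ 2 * p - 2 * (x / p) * x + q = q - x ^+ 2 / p.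
  by field; rewrite gt_eqF.
move: hh; rewrite e subr_ge0 ler_pdivrMr // => hh.
by rewrite mulrC.
Qed.

Lemma final_real (a b tb F e e' : R) :
  0 <= a -> a <= 1 -> 0 <= b -> b <= tb -> tb <= 1 -> 0 <= F ->
  F <= Num.sqrt (b * a) + Num.sqrt ((tb - b) * (1 - a)) ->
  1 - F ^+ 2 <= e' ^+ 2 -> e <= a -> 0 <= e' -> e - e' <= b.
Proof.
move=> a0 a1 b0 btb tb1 F0 hF hF2 ea e0.
set u := Num.sqrt (b * a); set v := Num.sqrt ((1 - b) * (1 - a)).
have u0 : 0 <= u := sqrtr_ge0 _.
have v0 : 0 <= v := sqrtr_ge0 _.
have u2 : u ^+ 2 = b * a by rewrite sqr_sqrtr //; apply: mulr_ge0.
have v2 : v ^+ 2 = (1 - b) * (1 - a).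
  by rewrite sqr_sqrtr //; apply: mulr_ge0; lra.
have hv : Num.sqrt ((tb - b) * (1 - a)) <= v.
  by apply: ler_wsqrtr; apply: ler_wpM2r; lra.
have Fuv : F <= u + v by apply: (le_trans hF); rewrite lerD2l.
pose P := a * (1 - a); pose Q := b * (1 - b).
have P0 : 0 <= P by apply: mulr_ge0; lra.
have Q0 : 0 <= Q by apply: mulr_ge0; lra.
have w2 : (u * v) ^+ 2 = P * Q by rewrite exprMn u2 v2 /P /Q; ring.
have w0 : 0 <= u * v := mulr_ge0 u0 v0.
have h2w : 2 * (u * v) <= P + Q.
  have ee : (2 * (u * v) - (P + Q)) * (2 * (u * v) + (P + Q)) = - (P - Q) ^+ 2.
    by rewrite -subr_sqr exprMn w2; ring.
  rewrite leNgt; apply/negP => lt.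
  have : 0 < (2 * (u * v) - (P + Q)) * (2 * (u * v) + (P + Q)).
    apply: mulr_gt0; lra.
  by rewrite ee oppr_gt0 ltNge sqr_ge0.
have : F ^+ 2 <= 1 - (a - b) ^+ 2.
  have : F ^+ 2 <= (u + v) ^+ 2 by nra.
  have : (u + v) ^+ 2 = b * a + (1 - b) * (1 - a) + 2 * (u * v).
    by rewrite sqrrD u2 v2; ring.
  rewrite /P /Q in h2w; nra.
move=> hh; nra.
Qed.

End RealAux.

Notation cRe := complex.Re.
Notation cIm := complex.Im.

Section Aux.
Variable R : realType.
Variable n : nat.
Local Notation C := R[i].
Local Notation M := 'M[C]_n.
Local Notation adj := (@adjmx R n).

Lemma adjE (A : M) : adj A = (A ^t* )%sesqui.
Proof. by rewrite /adjmx map_trmx. Qed.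

Lemma adjK (A : M) : adj (adj A) = A.
Proof. by rewrite !adjE trmxCK. Qed.

Lemma adjM (A B : M) : adj (A *m B) = adj B *m adj A.
Proof. by rewrite /adjmx map_mxM trmx_mul. Qed.

Lemma adjD (A B : M) : adj (A + B) = adj A + adj B.
Proof. by apply/matrixP=> i j; rewrite !mxE rmorphD. Qed.

Lemma adjN (A : M) : adj (- A) = - adj A.
Proof. by apply/matrixP=> i j; rewrite !mxE rmorphN. Qed.

Lemma adjB (A B : M) : adj (A - B) = adj A - adj B.
Proof. by rewrite adjD adjN. Qed.

Lemma adj1 : adj 1%:M = 1%:M.
Proof. by rewrite /adjmx map_mx1 trmx1. Qed.

Lemma adjZ (a : C) (A : M) : adj (a *: A) = a^* *: adj A.
Proof. by apply/matrixP=> i j; rewrite !mxE rmorphM. Qed.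

Lemma tr_adj (A : M) : \tr (adj A) = (\tr A)^*.
Proof.
rewrite /adjmx mxtrace_tr /mxtrace rmorph_sum; apply: eq_bigr => i _.
by rewrite mxE.
Qed.

Lemma Re_conj (z : C) : cRe (z^*) = cRe z.
Proof. by case: z. Qed.


Lemma psd_herm (A : M) : psd A -> adj A = A.
Proof. by case. Qed.

Lemma psd_hermsym (A : M) : psd A -> A \is hermsymmx.
Proof.
move=> /psd_herm hA; apply/is_hermitianmxP.
by rewrite expr0 scale1r -adjE hA.
Qed.


Lemma psd_congr (A B : M) : psd A -> psd (adj B *m A *m B).
Proof.
move=> [hA pA]; split.
  by rewrite !adjM adjK hA mulmxA.
move=> v; have := pA (B *m v).
rewrite map_mxM trmx_mul -/(adjmx B).
by rewrite !mulmxA.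
Qed.

Lemma psd_diag (A : M) i : psd A -> 0 <= A i i.
Proof.
move=> [_ pA]; have := pA (delta_mx i 0).
have -> : map_mx conjc (delta_mx i 0 : 'cV[C]_n) = delta_mx i 0.
  by apply/matrixP=> a b; rewrite !mxE; case: (_ && _); rewrite ?conjc1 ?conjc0.
by rewrite trmx_delta -rowE -colE !mxE.
Qed.

Lemma tr_psd (A : M) : psd A -> 0 <= \tr A.
Proof. by move=> pA; rewrite /mxtrace; apply: sumr_ge0 => i _; apply: psd_diag. Qed.

Lemma spectral_psd (A : M) : adj A = A ->
  exists (V : M) (d : 'rV[C]_n),
    [/\ V *m adj V = 1%:M, adj V *m V = 1%:M, A = adj V *m diag_mx d *m V &
        forall i, (d 0 i)^* = d 0 i].
Proof.
move=> hA.
have hs : A \is hermsymmx.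
  by apply/is_hermitianmxP; rewrite expr0 scale1r -adjE hA.
have /orthomx_spectralP eA := hermitian_normalmx hs.
have uP := spectral_unitarymx A.
have rd := hermitian_spectral_diag_real hs.
exists (spectralmx A), (spectral_diag A); split.
- by rewrite adjE; apply/unitarymxP.
- by rewrite adjE -invmx_unitary // mulVmx // unitarymx_unit.
- by rewrite adjE -invmx_unitary.
- move=> i; have := realmxC rd => /matrixP /(_ 0 i); rewrite mxE; exact.
Qed.

Lemma tr_mul_psd (A B : M) : psd A -> psd B -> 0 <= \tr (A *m B).
Proof.
move=> pA pB.
have [V [d [VV VV' eA _]]] := spectral_psd (psd_herm pA).
have eD : V *m A *m adj V = diag_mx d.
  by rewrite eA !mulmxA VV mul1mx -mulmxA VV mulmx1.
have pD : psd (diag_mx d) by rewrite -eD -{1}(adjK V); apply: psd_congr.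
have pN : psd (V *m B *m adj V) by rewrite -{1}(adjK V); apply: psd_congr.
have -> : \tr (A *m B) = \tr (diag_mx d *m (V *m B *m adj V)).
  by rewrite eA -!mulmxA mxtrace_mulC !mulmxA.
rewrite mul_diag_mx /mxtrace; apply: sumr_ge0 => i _.
rewrite mxE; apply: mulr_ge0.
  by have := psd_diag i pD; rewrite mxE eqxx mulr1n.
exact: psd_diag.
Qed.


Lemma adj_diag (d : 'rV[C]_n) : adj (diag_mx d) = diag_mx (\row_j (d 0 j)^* ).
Proof.
apply/matrixP=> i j; rewrite !mxE; case: (eqVneq i j) => [->|ne].
  by rewrite !mulr1n.
by rewrite !mulr0n conjc0.
Qed.

Lemma pinv_psd (S : M) : psd S -> exists T : M,
  [/\ adj T = T, T *m (S *m S) = S & T *m T *m (S *m S) *m T *m T = T *m T].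
Proof.
move=> pS.
have [V [d [VV VV' eS rd]]] := spectral_psd (psd_herm pS).
pose f (e : 'rV[C]_n) := adj V *m diag_mx e *m V.
have fM e1 e2 : f e1 *m f e2 = f (\row_j (e1 0 j * e2 0 j)).
  rewrite /f !mulmxA -(mulmxA _ V) VV mulmx1 -(mulmxA _ (diag_mx e1)).
  by rewrite mulmx_diag.
pose di := \row_j (d 0 j)^-1.
exists (f di); rewrite eS -/(f d) !fM; split.
- rewrite /f !adjM adjK adj_diag !mulmxA; congr (_ *m _ *m _).
  congr diag_mx; apply/rowP=> j; rewrite !mxE conjc_inv rd //.
- congr f; apply/rowP=> j; rewrite !mxE.
  have [->|nz] := eqVneq (d 0 j) 0; first by rewrite !mulr0.
  by rewrite mulrA mulVf // mul1r.
- congr f; apply/rowP=> j; rewrite !mxE.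
  have [->|nz] := eqVneq (d 0 j) 0; first by rewrite invr0 !mul0r.
  by field.
Qed.


Lemma trB (A B : M) : \tr (A - B) = \tr A - \tr B.
Proof. by rewrite mxtraceD raddfN. Qed.

Lemma tr_proj_le (Pi N : M) : adj Pi = Pi -> Pi *m Pi = Pi -> psd N ->
  \tr (N *m Pi) <= \tr N.
Proof.
move=> hP iP pN; pose K := 1%:M - Pi.
have hK : adj K = K by rewrite /K adjB adj1 hP.
have iK : K *m K = K.
  by rewrite /K mulmxBl !mulmxBr !mul1mx !mulmx1 iP subrr subr0.
rewrite -subr_ge0.
have -> : \tr N - \tr (N *m Pi) = \tr (adj K *m N *m K).
  by rewrite hK [in RHS]mxtrace_mulC mulmxA iK /K mulmxBl mul1mx trB (mxtrace_mulC Pi).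
by apply: tr_psd; apply: psd_congr.
Qed.

Lemma quad_ge0 (Mq A B : M) (s : R) : psd Mq ->
  0 <= s ^+ 2 * cRe (\tr (adj A *m Mq *m A)) - 2 * s * cRe (\tr (adj A *m Mq *m B))
       + cRe (\tr (adj B *m Mq *m B)).
Proof.
move=> pM.
have h0 := tr_psd (psd_congr (s%:C *: A - B) pM).
have eg : \tr (adj B *m Mq *m A) = (\tr (adj A *m Mq *m B))^*.
  by rewrite -tr_adj !adjM adjK (psd_herm pM) mulmxA.
move: h0; rewrite adjB adjZ.
rewrite [_^* *: _](_ : _ = s%:C *: adj A); last first.
  by congr (_ *: _); exact: conjc_real.
rewrite mulmxBl mulmxBr !mulmxBl.
rewrite -!scalemxAl -!scalemxAr !trB !mxtraceZ eg.
move: (\tr (adj A *m Mq *m A)) (\tr (adj A *m Mq *m B)) (\tr (adj B *m Mq *m B)).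
move=> [a1 a2] [b1 b2] [c1 c2]; rewrite lecE /= => /andP[_].
move=> h; apply: le_trans h _; rewrite le_eqVlt; apply/orP; left; apply/eqP; ring.
Qed.


Lemma ReD (z w : C) : cRe (z + w) = cRe z + cRe w.
Proof. by case: z; case: w. Qed.

Lemma ReB (z w : C) : cRe (z - w) = cRe z - cRe w.
Proof. by case: z; case: w. Qed.

Lemma Re_le (z w : C) : z <= w -> cRe z <= cRe w.
Proof. by rewrite lecE => /andP[]. Qed.

Lemma Re_ge0 (z : C) : 0 <= z -> 0 <= cRe z.
Proof. exact: Re_le. Qed.

Lemma psd0 : psd (0 : M).
Proof.
split; first by apply/matrixP=> i j; rewrite !mxE conjc0.
by move=> v; rewrite mulmx0 mul0mx mxE.
Qed.

Lemma psd_sqrt_spec (A : M) :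
  psd (psd_sqrt A) /\ (psd_sqrt A *m psd_sqrt A = A \/ psd_sqrt A = 0).
Proof.
rewrite /psd_sqrt; case: pselect => [H|_]; last by split; [exact: psd0|right].
by case: (cid H) => B [pB eB] /=; split => //; left.
Qed.


Lemma cs_tr (Mq A B : M) : psd Mq ->
  cRe (\tr (adj A *m Mq *m B)) <=
  Num.sqrt (cRe (\tr (adj A *m Mq *m A)) * cRe (\tr (adj B *m Mq *m B))).
Proof.
move=> pM; apply: cs_real.
- by apply/Re_ge0/tr_psd/psd_congr.
- by apply/Re_ge0/tr_psd/psd_congr.
- by move=> s _; have := @quad_ge0 Mq A B s pM.
Qed.

Lemma fid_bound (rho rb Q : M) : density rho -> psd rb -> psd Q -> psd (1%:M - Q) ->
  0 <= fidelity rb rho /\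
  (fidelity rb rho = 0 \/
   fidelity rb rho <= Num.sqrt (cRe (\tr (Q *m rb)) * cRe (\tr (Q *m rho)))
     + Num.sqrt ((cRe (\tr rb) - cRe (\tr (Q *m rb))) * (1 - cRe (\tr (Q *m rho))))).
Proof.
move=> [prho trho] prb pQ pQ'.
rewrite /fidelity /trnorm.
have [pP ePP] := psd_sqrt_spec rb.
have [pR eRR] := psd_sqrt_spec rho.
set P := psd_sqrt rb in pP ePP *; set R1 := psd_sqrt rho in pR eRR *.
set X := P *m R1.
have [pS [eS|S0]] := psd_sqrt_spec (adjmx X *m X); last first.
  by rewrite S0 mxtrace0; split => //; left.
set S := psd_sqrt (adjmx X *m X) in pS eS *.
split; first exact/Re_ge0/tr_psd.
have [T [hT eT1 eT2]] := pinv_psd pS.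
pose U := X *m T.
have trS : \tr S = \tr (adj U *m X).
  by rewrite /U adjM hT -mulmxA -eS eT1.
rewrite trS.
case: ePP => [eP|P0]; last first.
  by left; rewrite /X P0 mul0mx mulmx0 mxtrace0.
case: eRR => [eR|R0]; last first.
  by left; rewrite /X R0 mulmx0 mulmx0 mxtrace0.
right.
have hP := psd_herm pP; have hR := psd_herm pR.
pose A := P *m U.
have splitX : \tr (adj U *m X) =
   \tr (adj A *m Q *m R1) + \tr (adj A *m (1%:M - Q) *m R1).
  rewrite -mxtraceD -mulmxDl -mulmxDr addrC subrK mulmx1 /A adjM hP /X mulmxA //.
rewrite splitX ReD.
pose Pi := U *m adj U.
have hPi : adj Pi = Pi by rewrite /Pi adjM adjK.
have iPi : Pi *m Pi = Pi.
  have e1 : Pi *m Pi = X *m (T *m T *m (S *m S) *m T *m T) *m adj X.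
    by rewrite /Pi /U adjM hT eS !mulmxA.
  by rewrite e1 eT2 /Pi /U adjM hT !mulmxA.
have pbound (Qx : M) : psd Qx ->
    cRe (\tr (adj A *m Qx *m A)) <= cRe (\tr (Qx *m rb)).
  move=> pQx; apply: Re_le.
  have -> : \tr (adj A *m Qx *m A) = \tr ((adj P *m Qx *m P) *m Pi).
    by rewrite /A adjM hP -!mulmxA mxtrace_mulC /Pi !mulmxA.
  apply: (le_trans (tr_proj_le hPi iPi (psd_congr P pQx))).
  by rewrite hP -mulmxA mxtrace_mulC -mulmxA eP.
have qval (Qx : M) : \tr (adj R1 *m Qx *m R1) = \tr (Qx *m rho).
  by rewrite hR -mulmxA mxtrace_mulC -mulmxA eR.
have p0 (Qx : M) : psd Qx -> 0 <= cRe (\tr (adj A *m Qx *m A)).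
  by move=> pQx; apply/Re_ge0/tr_psd/psd_congr.
have q0 (Qx : M) : psd Qx -> 0 <= cRe (\tr (Qx *m rho)).
  by move=> pQx; rewrite -qval; apply/Re_ge0/tr_psd/psd_congr.
apply: lerD.
  apply: le_trans (cs_tr A R1 pQ) _; rewrite qval.
  by apply: ler_wsqrtr; apply: ler_wpM2r; [exact: q0|exact: pbound].
apply: le_trans (cs_tr A R1 pQ') _; rewrite qval.
apply: ler_wsqrtr.
have -> : cRe (\tr ((1%:M - Q) *m rho)) = 1 - cRe (\tr (Q *m rho)).
  by rewrite mulmxBl mul1mx trB ReB trho.
have -> : cRe (\tr rb) - cRe (\tr (Q *m rb)) = cRe (\tr ((1%:M - Q) *m rb)).
  by rewrite mulmxBl mul1mx trB ReB.
apply: ler_wpM2r.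
  by have := q0 _ pQ'; rewrite mulmxBl mul1mx trB ReB trho.
exact: pbound.
Qed.


Lemma ReMr (r : R) (z : C) : cRe (r%:C * z) = r * cRe z.
Proof. by case: z => a b /=; rewrite mul0r subr0. Qed.

Lemma key (rho sigma : M) (eps eps' x mu : R) :
  density rho -> psd sigma -> eps <= 1 -> eps' < eps -> 0 <= eps' ->
  DH_set eps rho sigma x -> Dmax_set eps' rho sigma mu ->
  mu * (eps - eps') <= x * eps.
Proof.
move=> drho psig e1 ee e0 [Q [pQ lQ eQ xQ]] [rb [prb trb lmu hF]].
have [prho trho] := drho.
have epos : 0 < eps by apply: le_lt_trans ee.
have xe : x * eps = cRe (\tr (Q *m sigma)).
  have : \tr (Q *m sigma) = x%:C * eps%:C.
    have eC : eps%:C != 0 by rewrite eq_complex /= (gt_eqF epos).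
    by rewrite xQ mulfVK.
  by move=> ->; rewrite ReMr.
have aE : eps <= cRe (\tr (Q *m rho)) by have := Re_le eQ.
have a1 : cRe (\tr (Q *m rho)) <= 1.
  have := Re_ge0 (tr_mul_psd lQ prho).
  by rewrite mulmxBl mul1mx trB ReB trho subr_ge0.
have a0 : 0 <= cRe (\tr (Q *m rho)) by apply/Re_ge0/tr_mul_psd.
have b0 : 0 <= cRe (\tr (Q *m rb)) by apply/Re_ge0/tr_mul_psd.
have btb : cRe (\tr (Q *m rb)) <= cRe (\tr rb).
  have := Re_ge0 (tr_mul_psd lQ prb).
  by rewrite mulmxBl mul1mx trB ReB subr_ge0.
have tb1 : cRe (\tr rb) <= 1 by have := Re_le trb.
have sg0 : 0 <= cRe (\tr (Q *m sigma)) by apply/Re_ge0/tr_mul_psd.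
have hmu : mu * cRe (\tr (Q *m rb)) <= cRe (\tr (Q *m sigma)).
  have := Re_ge0 (tr_mul_psd pQ lmu).
  by rewrite mulmxBr trB ReB -scalemxAr mxtraceZ ReMr subr_ge0.
have [F0 [Fz|Fle]] := fid_bound drho prb pQ lQ.
  move: hF; rewrite Fz expr0n /= subr0 => h1.
  exfalso; nra.
have := final_real a0 a1 b0 btb tb1 F0 Fle hF aE e0.
move=> hb; rewrite xe.
have [mu0|mu0] := lerP 0 mu; nra.
Qed.
End Aux.

Local Open Scope classical_set_scope.

Theorem lemmaA6 (R : realType) (n : nat) (rho sigma : 'M[R[i]]_n)
  (eps eps' : R) :
  density rho -> psd sigma -> eps <= 1 -> eps' < eps -> 0 <= eps' ->
  (DH eps rho sigma <= Dmax eps' rho sigma + (log2 (eps / (eps - eps')))%:E)%E.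
Proof.
move=> drho psig e1 ee e0.
have epos : 0 < eps by apply: le_lt_trans ee.
have kpos : 0 < eps - eps' by rewrite subr_gt0.
set c := eps / (eps - eps').
have cpos : 0 < c by apply: divr_gt0.
have kb x mu : DH_set eps rho sigma x -> Dmax_set eps' rho sigma mu -> mu <= x * c.
  move=> hx hmu; have := key drho psig e1 ee e0 hx hmu.
  by rewrite /c mulrA ler_pdivlMr.
rewrite /DH /Dmax.
set A := [set x%:E | x in DH_set eps rho sigma].
set B := [set x%:E | x in Dmax_set eps' rho sigma].
case: (pselect (exists x0, DH_set eps rho sigma x0)) => [[x0 hx0]|nA]; last first.
  have -> : A = set0.
    by apply/seteqP; split => // y [x hx _]; exfalso; apply: nA; exists x.
  by rewrite ereal_inf0 /= leNye.
have supB : (ereal_sup B <= (x0 * c)%:E)%E.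
  by apply: ge_ereal_sup => _ [mu hmu <-]; rewrite lee_fin; apply: kb.
case eB: (ereal_sup B) supB => [m| |] //= supB; last first.
  by rewrite leey.
case: ifPn => [_|]; first by rewrite leey.
rewrite -ltNge => mpos.
have infA : ((m / c)%:E <= ereal_inf A)%E.
  apply: le_ereal_inf_tmp => _ [x hx <-]; rewrite lee_fin ler_pdivrMr //.
  rewrite -lee_fin -eB; apply: ge_ereal_sup => _ [mu hmu <-].
  by rewrite lee_fin; apply: kb.
case eA: (ereal_inf A) infA => [s| |] //= infA; last by rewrite leNye.
rewrite lee_fin in infA.
have spos : 0 < s by apply: lt_le_trans infA; apply: divr_gt0.
rewrite (leNgt s 0) spos /= -EFinD lee_fin.
have ln2 : 0 < ln (2 : R) by apply: ln_gt0; lra.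
rewrite /log2 -!mulNr -mulrDl ler_pM2r ?invr_gt0 //.
have -> : ln m = ln (m / c) + ln c.
  by rewrite -lnM ?posrE ?divr_gt0 // divfK // gt_eqF.
have : ln (m / c) <= ln s by rewrite ler_ln ?posrE ?divr_gt0.
lra.
Qed.
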